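(* The class of coherent compact spaces is not $\omega$-projective: there is a projective system of coherent compact topological spaces, indexed by a directed preordered set with a countable cofinal subset, whose projective limit in the category of topological spaces is not coherent (hence not a coherent compact space).
   Context: A projective system of topological spaces consists of a directed preordered set $(I,\sqsubseteq)$, spaces $X_i$ and continuous maps $p_{ij}\colon X_j\to X_i$ for $i\sqsubseteq j$ with $p_{ii}=\mathrm{id}$ and $p_{ij}\circ p_{jk}=p_{ik}$; its projective limit is its limit in the category of topological spaces. A space is coherent if the intersection of any two compact saturated subsets is compact (saturated = upward closed in the specialization preorder; compactness assumes no separation axiom). *)

(* Defs.v *)
From mathcomp Require Import all_boot all_order.
From mathcomp Require Import all_classical topology.
Set Implicit Arguments. Unset Strict Implicit. Unset Printing Implicit Defensive.
Local Open Scope classical_set_scope.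

(* Specialization preorder: x <= y iff x lies in the closure of {y}.
   Open sets are upward closed for this preorder. *)
Definition specialization_le (T : topologicalType) (x y : T) : Prop :=
  closure [set y] x.

Definition saturated (T : topologicalType) (A : set T) : Prop :=
  forall x y : T, A x -> specialization_le x y -> A y.

Definition coherent (T : topologicalType) : Prop :=
  forall A B : set T, compact A -> saturated A -> compact B -> saturated B ->
    compact (A `&` B).

Definition directed_preorder (I : Type) (le : I -> I -> Prop) : Prop :=
  (forall i, le i i) /\ (forall i j k, le i j -> le j k -> le i k) /\
  (exists i : I, True) /\ (forall i j, exists k, le i k /\ le j k).

Definition has_countable_cofinal (I : Type) (le : I -> I -> Prop) : Prop :=
  exists C : set I, countable C /\ forall i, exists2 c, C c & le i c.

Definition projective_system (I : Type) (le : I -> I -> Prop)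
  (X : I -> topologicalType) (p : forall i j, le i j -> X j -> X i) : Prop :=
  (forall i j (h : le i j), continuous (p i j h)) /\
  (forall i (h : le i i), p i i h = id) /\
  (forall i j k (hij : le i j) (hjk : le j k) (hik : le i k),
      p i j hij \o p j k hjk = p i k hik).

Definition is_cone (I : Type) (le : I -> I -> Prop)
  (X : I -> topologicalType) (p : forall i j, le i j -> X j -> X i)
  (Y : topologicalType) (q : forall i, Y -> X i) : Prop :=
  (forall i, continuous (q i)) /\
  (forall i j (h : le i j), p i j h \o q j = q i).

Definition is_projective_limit (I : Type) (le : I -> I -> Prop)
  (X : I -> topologicalType) (p : forall i j, le i j -> X j -> X i)
  (L : topologicalType) (pi : forall i, L -> X i) : Prop :=
  is_cone p pi /\
  forall (Y : topologicalType) (q : forall i, Y -> X i), is_cone p q ->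
    exists! u : Y -> L, continuous u /\ forall i, pi i \o u = q i.

(* Main.v *)
From HB Require Import structures.
Require Import Defs.
From mathcomp Require Import all_boot all_order.
From mathcomp Require Import all_classical topology.
Local Open Scope classical_set_scope.
Definition Sp (o : option nat) : Type := (nat + bool)%type.
Definition tl n (x : nat + bool) := match x with inl k => (n <= k)%N | inr _ => true end.
Definition op (o : option nat) (U : set (nat + bool)) : Prop :=
  match o with
  | Some n => (exists x, U x /\ tl n x) -> forall k, (n <= k)%N -> U (inl k)
  | None => forall bb, U (inr bb) -> exists n, forall k, (n <= k)%N -> U (inl k)
  end.
Lemma opT o : op o setT. Proof. by case: o => [n|] //= => _; exists 0. Qed.
Lemma opI o : setI_closed (op o).
Proof.
case: o => [n|] A B /= hA hB.
  move=> [x [[Ax Bx] tx]] k nk; split; [apply: hA|apply: hB] => //; by exists x.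
move=> bb [Ab Bb]; have [m hm] := hA _ Ab; have [m' hm'] := hB _ Bb.
exists (maxn m m') => k; rewrite geq_max => /andP[h1 h2]; split; [exact: hm|exact: hm'].
Qed.
Lemma opU o : forall (I : Type) (f : I -> set (nat+bool)), (forall i, op o (f i)) -> op o (\bigcup_i f i).
Proof.
case: o => [n|] I f hf /=.
  move=> [x [[i _ fx] tx]] k nk; exists i => //; apply: (hf i) => //; by exists x.
move=> bb [i _ fib]; have [m hm] := hf i _ fib; exists m => k mk; exists i => //; exact: hm.
Qed.
HB.instance Definition _ (o : option nat) := Choice.on (Sp o).
HB.instance Definition _ (o : option nat) := isOpenTopological.Build (Sp o) (@opT o) (@opI o) (@opU o).
Lemma openSp o (A : set (Sp o)) : open A <-> op o A.
Proof.
rewrite openE /interior /=; split; last first.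
  by move=> hA x Ax; exists A; split.
move=> hA.
pose I := {B : set (nat + bool) | op o B /\ B `<=` A}.
have -> : A = \bigcup_(i : I) proj1_sig i.
  rewrite predeqE => x; split.
    move=> /hA [B [oB Bx BA]]; by exists (exist _ B (conj oB BA)).
  by move=> [i _]; case: i => B [_ BA] /= Bx; apply: BA.
apply: opU => i; case: i => B [oB _] //.
Qed.
Lemma card_nat : countable [set: nat].
Proof. exact: card_lexx. Qed.
Lemma key (T : topologicalType) (A : set T) x : A x ->
  (forall W, nbhs x W -> finite_set (A `\` W)) -> compact A.
Proof.
move=> Ax fin F PF FA.
case: (pselect (cluster F x)) => [cx|ncx]; first by exists x.
have [U [W [FU nW UW]]] : exists U W, [/\ F U, nbhs x W & ~ (U `&` W !=set0)].
  apply: contra_notP ncx => H B C FB nC; apply: contrapT => nBC; apply: H.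
  by exists B, C.
have FC : F (A `&` U) by apply: filterI.
have finC : finite_set (A `&` U).
  apply: sub_finite_set (fin W nW) => y [Ay Uy]; split => // Wy; apply: UW; by exists y.
have [y [[Ay Uy] cy]] := finite_compact finC PF FC.
by exists y.
Qed.

Lemma fin_small n : finite_set ([set inl k | k in `I_n] `|` [set inr true; inr false] : set (nat + bool)).
Proof. rewrite finite_setU; split; [exact: finite_image (finite_II n)| exact: finite_set2]. Qed.

Lemma all_compact n (A : set (Sp (Some n))) : compact A.
Proof.
case: (pselect (exists x, A x /\ tl n x)) => [[x [Ax tx]]|nt].
  apply: (@key _ A x Ax) => W [B [oB Bx BW]].
  apply: sub_finite_set (fin_small n) => y [Ay nWy].
  case: y Ay nWy => [k|bb] Ay nWy.
    left; exists k => //=; rewrite /mkset ltnNge; apply/negP => nk.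
    by apply: nWy; apply: BW; apply: oB => //; exists x.
  by right; case: bb {Ay nWy}; [left|right].
apply: finite_compact; apply: sub_finite_set (fin_small n) => y Ay.
case: y Ay => [k|bb] Ay; last by right; case: bb {Ay}; [left|right].
left; exists k => //=; rewrite /mkset ltnNge; apply/negP => nk.
by apply: nt; exists (inl k).
Qed.

Lemma open_sat (T : topologicalType) (A : set T) : open A -> saturated A.
Proof.
move=> oA x y Ax cl.
have [z [-> Az]] := cl A (open_nbhs_nbhs (conj oA Ax)).
by [].
Qed.

Lemma L_A_compact bb : compact ([set x | x <> inr bb] : set (Sp None)).
Proof.
apply: (@key (Sp None) [set x | x <> inr bb] (inr (~~ bb))); first by case: bb.
move=> W [B [oB Bx BW]]; have [m hm] := oB _ Bx.
apply: sub_finite_set (fin_small m) => y [Ay nWy].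
case: y Ay nWy => [k|b] Ay nWy; last by right; case: b {Ay nWy}; [left|right].
left; exists k => //=; rewrite /mkset ltnNge; apply/negP => nk.
by apply: nWy; apply: BW; apply: hm.
Qed.

Lemma L_A_open bb : open ([set x | x <> inr bb] : set (Sp None)).
Proof. by apply/openSp => b _; exists 0. Qed.

Lemma L_notcoh : ~ coherent (Sp None).
Proof.
move=> coh.
have := coh _ _ (L_A_compact true) (@open_sat _ _ (L_A_open true))
   (L_A_compact false) (@open_sat _ _ (L_A_open false)).
have PF : ProperFilter (fmap (inl : nat -> Sp None) \oo) by apply: fmap_proper_filter.
move=> /(_ _ PF) [].
  by apply: (@filterE nat \oo _) => k; split.
case=> [k|[]] [[h1 h2] cl]; [|by []|by []].
have nb : nbhs (inl k : Sp None) [set inl k] by exists [set inl k]; split => //= bb.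
have Fk : fmap (inl : nat -> Sp None) \oo [set y | exists j, (k < j)%N /\ y = inl j].
  apply: filterS (nbhs_infty_gt k) => j kj; by exists j.
have [z [[j [kj ->]] /= [jk]]] := cl _ _ Fk nb.
by move: kj; rewrite jk ltnn.
Qed.

Lemma cont_id i j : (i <= j)%N -> continuous (fun x : Sp (Some j) => (x : Sp (Some i))).
Proof.
move=> ij; apply/continuousP => A /openSp oA; apply/openSp => -[x [Ax tx]] k jk.
apply: oA; last exact: leq_trans jk.
exists x; split => //; case: x Ax tx => //= k' _ jk'; exact: leq_trans jk'.
Qed.

Lemma pi_cont i : continuous (fun x : Sp None => (x : Sp (Some i))).
Proof.
apply/continuousP => A /openSp oA; apply/openSp => bb Ab; exists i => k ik.
by apply: oA => //; exists (inr bb).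
Qed.

Lemma loc (A : set (nat + bool)) x : op None A -> A x ->
  exists n V, [/\ op (Some n) V, V x & V `<=` A].
Proof.
move=> oA Ax; case: x Ax => [k|bb] Ax.
  exists k.+1, [set inl k]; split => //=; last by move=> y ->.
  by move=> [y [-> /=]]; rewrite ltnn.
have [m hm] := oA _ Ax.
exists m, [set y | match y with inl k => (m <= k)%N | inr b => b = bb end].
split; [by move=> _ k mk | by [] | ].
by case=> [k /= /hm //|b /= ->].
Qed.

Theorem corollary4p7 :
  exists (I : Type) (le : I -> I -> Prop),
    directed_preorder le /\ has_countable_cofinal le /\
    exists (X : I -> topologicalType) (p : forall i j, le i j -> X j -> X i),
      projective_system p /\
      (forall i, compact [set: X i] /\ coherent (X i)) /\
      exists (L : topologicalType) (pi : forall i, L -> X i),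
        is_projective_limit p pi /\ ~ coherent L.
Proof.
exists nat, (fun i j => (i <= j)%N); split.
  split; first by [].
  split; first by move=> i j k; exact: leq_trans.
  split; first by exists 0.
  by move=> i j; exists (maxn i j); rewrite leq_maxl leq_maxr.
split.
  exists setT; split; first exact: card_lexx.
  by move=> i; exists i.
exists (fun i => Sp (Some i) : topologicalType), (fun i j _ x => x).
split.
  split; first by move=> i j h; exact: cont_id h.
  by split.
split.
  by move=> i; split; [exact: all_compact | move=> A B *; exact: all_compact].
exists (Sp None), (fun i x => x); split; last exact: L_notcoh.
split.
  split; [exact: pi_cont | by []].
move=> Y q [qc qe].
have qeq : forall i, q i = q 0 by move=> i; exact: (qe 0 i (leq0n i)).
exists (q 0); split.
  split; last by move=> i; rewrite (qeq i).
  apply/continuousP => A /openSp oA; rewrite openE => y Ay.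
  have [n [V [oV Vy VA]]] := @loc _ _ oA Ay.
  have oP : open (q n @^-1` V).
    by apply: (proj1 (continuousP _) (qc n)); apply/openSp.
  apply: (@filterS _ _ _ (q n @^-1` V)); first by move=> z /VA; rewrite (qeq n).
  apply: open_nbhs_nbhs; split => //=; by rewrite (qeq n).
by move=> u [_ hu]; rewrite -(hu 0).
Qed.
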